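(* Let $\mu$ be a positive finite Borel measure on $[0,1)$. The following are equivalent: (i) the operators $H_\mu:A(\mathbb{T})\to A(\mathbb{T})$ and $C_\mu:A(\mathbb{T})\to A(\mathbb{T})$ are well defined; (ii) the operators $H_\mu:A(\mathbb{T})\to A(\mathbb{T})$ and $C_\mu:A(\mathbb{T})\to A(\mathbb{T})$ are nuclear; (iii) $\sum_{n=0}^\infty\mu_n<\infty$.
   Context: $A(\mathbb{T})$ is the Wiener algebra, identified with $\ell^1_A=\{f(z)=\sum_{n\ge0}a_nz^n: \|f\|_1=\sum_n|a_n|<\infty\}$, i.e. with the sequence space $\ell^1$ of Taylor coefficients. $\mu_n=\int_0^1t^n\,d\mu(t)$. On coefficient sequences, $H_\mu((a_n)_{n\ge0})=\left(\sum_{n=0}^\infty\mu_{n+k}a_n\right)_{k\ge0}$ and $C_\mu((a_n)_{n\ge0})=\left(\mu_k\sum_{n=0}^k a_n\right)_{k\ge0}$ (Cesàro-type operator). An operator $T:X\to Y$ between Banach spaces is nuclear if there exist $(x_n^* )\subseteq X^*$, $(y_n)\subseteq Y$ with $\sum_n\|x_n^*\|\|y_n\|<\infty$ and $T=\sum_n x_n^*(\cdot)y_n$. *)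

(* Defs.v *)
From HB Require Import structures.
From mathcomp Require Import all_boot all_order all_algebra.
From mathcomp Require Import all_classical all_reals all_analysis.
Set Implicit Arguments. Unset Strict Implicit. Unset Printing Implicit Defensive.
Import Order.TTheory GRing.Theory Num.Theory.
Import numFieldNormedType.Exports.
Local Open Scope classical_set_scope.
Local Open Scope ring_scope.

Section Defs.
Variable R : realType.

(* The Wiener algebra A(T), identified with l^1 on its Taylor coefficients. *)
Definition in_l1 (a : nat -> R) : Prop := cvg (series (fun k => `|a k|) @ \oo).
Definition l1norm (a : nat -> R) : R := limn (series (fun k => `|a k|)).

Definition moment (mu : {measure set R -> \bar R}) (n : nat) : R :=
  fine (\int[mu]_(t in `[0%R, 1%R[) (t ^+ n)%:E)%E.

Definition Hmu (mu : {measure set R -> \bar R}) (a : nat -> R) : nat -> R :=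
  fun k => limn (series (fun n => moment mu (n + k) * a n)).

Definition Hmu_series_cvg (mu : {measure set R -> \bar R}) (a : nat -> R) : Prop :=
  forall k, cvg (series (fun n => moment mu (n + k) * a n) @ \oo).

Definition Cmu (mu : {measure set R -> \bar R}) (a : nat -> R) : nat -> R :=
  fun k => moment mu k * \sum_(0 <= n < k.+1) a n.

Definition maps_l1 (T : (nat -> R) -> (nat -> R)) : Prop :=
  forall a, in_l1 a -> in_l1 (T a).

Definition bounded_functional_l1 (x : (nat -> R) -> R) (c : R) : Prop :=
  [/\ forall a b, in_l1 a -> in_l1 b -> x (fun k => a k + b k) = x a + x b,
      forall r a, in_l1 a -> x (fun k => r * a k) = r * x a,
      0 <= c &
      forall a, in_l1 a -> `|x a| <= c * l1norm a].

Definition nuclear_l1 (T : (nat -> R) -> (nat -> R)) : Prop :=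
  maps_l1 T /\
  exists (x : nat -> (nat -> R) -> R) (c : nat -> R) (y : nat -> nat -> R),
    [/\ forall j, bounded_functional_l1 (x j) (c j),
        forall j, in_l1 (y j),
        cvg (series (fun j => c j * l1norm (y j)) @ \oo) &
        forall a, in_l1 a ->
          (fun N => l1norm (fun k => T a k - \sum_(0 <= j < N) x j a * y j k))
            @ \oo --> 0].

End Defs.

(* Main.v *)
Require Import Defs.
From HB Require Import structures.
From mathcomp Require Import all_boot all_order all_algebra.
From mathcomp Require Import all_classical all_reals all_analysis.
Import Order.TTheory GRing.Theory Num.Theory.
Import numFieldNormedType.Exports.
From mathcomp Require Import measurable_realfun zify.
Local Open Scope classical_set_scope.
Local Open Scope ring_scope.
Set Implicit Arguments. Unset Strict Implicit. Unset Printing Implicit Defensive.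
Section Mom.
Variables (R : realType) (mu : {measure set R -> \bar R}).
Hypothesis mu_fin : (mu setT < +oo)%E.
Local Notation D := (`[0%R, 1%R[%classic : set R).
Let mD : measurable D. Proof. exact: measurable_itv. Qed.
Let mX n : measurable_fun D (EFin \o (fun t : R => t ^+ n)).
Proof. apply/measurable_EFinP; exact: measurable_funX. Qed.

Lemma inD (t : R) : D t -> 0 <= t /\ t < 1.
Proof. rewrite /= in_itv /= => /andP[]; done. Qed.

Lemma int_ge0 n : (0 <= \int[mu]_(t in D) (t ^+ n)%:E)%E.
Proof.
apply: integral_ge0 => t; rewrite /= in_itv /= => /andP[t0 _].
by rewrite lee_fin exprn_ge0.
Qed.

Lemma int_le n m : (m <= n)%N ->
  (\int[mu]_(t in D) (t ^+ n)%:E <= \int[mu]_(t in D) (t ^+ m)%:E)%E.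
Proof.
move=> mn; apply: ge0_le_integral => //; [|exact: mX|exact: mX|].
- by move=> t Dt; have [t0 _] := @inD t Dt; rewrite lee_fin exprn_ge0.
- move=> t Dt; have [t0 t1] := @inD t Dt.
  rewrite lee_fin ler_wiXn2l //. by rewrite ltW.
Qed.

Lemma int_fin n : (\int[mu]_(t in D) (t ^+ n)%:E)%E \is a fin_num.
Proof.
rewrite ge0_fin_numE ?int_ge0 //.
apply: (le_lt_trans (@int_le n 0%N (leq0n n))).
have -> : (\int[mu]_(t in D) (t ^+ 0)%:E = \int[mu]_(t in D) (cst 1%:E) t)%E.
  by apply: eq_integral => t _; rewrite expr0.
rewrite integral_cst // mul1e.
apply: le_lt_trans mu_fin; apply: le_measure; rewrite ?inE //=.
Qed.

Lemma moment_ge0 n : 0 <= moment mu n.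
Proof. exact/fine_ge0/int_ge0. Qed.

Lemma moment_le n m : (m <= n)%N -> moment mu n <= moment mu m.
Proof. by move=> mn; apply: fine_le; [exact: int_fin|exact: int_fin|exact: int_le]. Qed.
End Mom.
Section L1.
Variable R : realType.
Implicit Types (a b u : nat -> R).

Lemma psE (u : nat -> R) N : series u N = \sum_(0 <= k < N) u k.
Proof. by []. Qed.

Lemma ps_ge0 u N : (forall k, 0 <= u k) -> 0 <= series u N.
Proof. by move=> h; rewrite psE; apply: sumr_ge0 => k _. Qed.

Lemma ps_le_lim u : (forall k, 0 <= u k) -> cvgn (series u) ->
  forall N, series u N <= limn (series u).
Proof.
move=> h c N; apply: nondecreasing_cvgn_le => //.
by apply: nondecreasing_series => k _ _; exact: h.
Qed.

Lemma l1_ps_le a : in_l1 a -> forall N, \sum_(0 <= k < N) `|a k| <= l1norm a.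
Proof. by move=> h N; rewrite -psE; apply: ps_le_lim. Qed.

Lemma l1norm_ge0 a : in_l1 a -> 0 <= l1norm a.
Proof. by move=> h; apply: le_trans (l1_ps_le h 0); rewrite big_geq. Qed.

Lemma ps_bound_cvg u M : (forall k, 0 <= u k) ->
  (forall N, \sum_(0 <= k < N) u k <= M) -> cvgn (series u).
Proof.
move=> h hM; apply: nondecreasing_is_cvgn.
  by apply: nondecreasing_series => k _ _; exact: h.
by exists M => _ [N _ <-]; exact: hM.
Qed.

Lemma in_l1_bound b M : (forall N, \sum_(0 <= k < N) `|b k| <= M) -> in_l1 b.
Proof. by move=> h; apply: (@ps_bound_cvg _ M). Qed.

Lemma l1norm_le b M : (forall N, \sum_(0 <= k < N) `|b k| <= M) -> l1norm b <= M.
Proof.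
move=> h; apply: limr_le; first exact: (in_l1_bound h).
by apply: nearW => N; exact: h.
Qed.

Lemma lim_abs_le u M : cvgn (series u) ->
  (forall N, `|\sum_(0 <= k < N) u k| <= M) -> `|limn (series u)| <= M.
Proof.
move=> c h; rewrite -lim_norm //; apply: limr_le.
  exact: is_cvg_norm.
by apply: nearW => N; exact: h.
Qed.

Definition delta (j : nat) : nat -> R := fun k => (k == j)%:R.

Lemma ps_delta j N : \sum_(0 <= k < N) `|delta j k| = (j < N)%:R.
Proof.
elim: N => [|N IH]; first by rewrite big_geq.
rewrite big_nat_recr //= IH /delta.
case: (ltngtP N j) => h.
- have -> : (j < N.+1)%N = false by lia.
  by rewrite normr0 addr0.
- have -> : (j < N.+1)%N = true by lia.
  by rewrite normr0 addr0.
- by subst N; rewrite ltnSn normr1 add0r.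
Qed.

Lemma delta_l1 j : in_l1 (delta j).
Proof. by apply: (@in_l1_bound _ 1) => N; rewrite ps_delta; case: (j < N)%N. Qed.

Lemma delta_norm j : l1norm (delta j) = 1.
Proof.
apply: cvg_lim => //; apply: cvg_near_cst.
near=> N; rewrite psE ps_delta.
have -> : (j < N)%N by near: N; apply: nbhs_infty_gt.
by [].
Unshelve. all: by end_near. Qed.

Lemma sum_delta (f : nat -> R) N k :
  \sum_(0 <= j < N) f j * delta j k = (k < N)%:R * f k.
Proof.
elim: N => [|N IH]; first by rewrite big_geq // mul0r.
rewrite big_nat_recr //= IH /delta.
case: (ltngtP k N) => h.
- have -> : (k < N.+1)%N = true by lia.
  by rewrite mulr0 addr0.
- have -> : (k < N.+1)%N = false by lia.
  by rewrite mulr0 addr0.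
- by subst k; rewrite ltnSn mulr1 !mul1r mul0r add0r.
Qed.


Lemma tail_sum b N M : \sum_(0 <= k < M) `|b k - (k < N)%:R * b k| <=
  \sum_(0 <= k < M + N) `|b k| - \sum_(0 <= k < N) `|b k|.
Proof.
have h0 k : 0 <= `|b k - (k < N)%:R * b k| by [].
apply: (@le_trans _ _ (\sum_(0 <= k < M + N) `|b k - (k < N)%:R * b k|)).
  rewrite (@big_cat_nat _ _ _ M 0 (M + N)) ?leq_addr //=.
  by rewrite lerDl; apply: sumr_ge0.
rewrite (@big_cat_nat _ _ _ N 0 (M + N)) ?leq_addl //=.
rewrite [X in _ <= X - _](@big_cat_nat _ _ _ N 0 (M + N)) ?leq_addl //=.
rewrite addrAC subrr add0r.
rewrite big1_seq ?add0r; last first.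
  move=> k; rewrite mem_index_iota => kN.
  have -> : (k < N)%N = true by lia.
  by rewrite mul1r subrr normr0.
apply: ler_sum_nat => k Nk.
have -> : (k < N)%N = false by lia.
by rewrite mul0r subr0.
Qed.

Lemma tail_cvg b : in_l1 b ->
  (fun N => l1norm (fun k => b k - (k < N)%:R * b k)) @ \oo --> 0.
Proof.
move=> hb.
have hS N : forall M, \sum_(0 <= k < M) `|b k - (k < N)%:R * b k| <=
   l1norm b - \sum_(0 <= k < N) `|b k|.
  move=> M; apply: le_trans (tail_sum b N M) _.
  by rewrite lerD2r; apply: l1_ps_le.
apply: (@squeeze_cvgr _ _ _ _ (fun=> 0) (fun N => l1norm b - series (fun k => `|b k|) N)).
- apply: nearW => N; apply/andP; split.
    by apply: l1norm_ge0; apply: in_l1_bound; exact: hS.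
  by apply: l1norm_le; exact: hS.
- exact: cvg_cst.
- rewrite -(subrr (l1norm b)); apply: cvgB; first exact: cvg_cst.
  exact: hb.
Qed.

Lemma nuclear_gen (T : (nat -> R) -> (nat -> R)) (c : nat -> R) :
  maps_l1 T -> (forall j, 0 <= c j) -> cvgn (series c) ->
  (forall j a b, in_l1 a -> in_l1 b -> T (fun k => a k + b k) j = T a j + T b j) ->
  (forall j r a, in_l1 a -> T (fun k => r * a k) j = r * T a j) ->
  (forall j a, in_l1 a -> `|T a j| <= c j * l1norm a) ->
  nuclear_l1 T.
Proof.
move=> hT c0 cc hD hZ hB; split => //.
exists (fun j a => T a j), c, delta; split.
- by move=> j; split => //; [move=> a b ha hb; exact: hD|move=> r a ha; exact: hZ|move=> a ha; exact: hB].
- exact: delta_l1.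
- by under eq_fun do rewrite delta_norm mulr1.
- move=> a ha.
  under eq_fun do (under eq_fun do rewrite sum_delta).
  exact/tail_cvg/hT.
Qed.

End L1.

Section Main.
Variables (R : realType) (mu : {measure set R -> \bar R}).
Hypothesis mu_fin : (mu setT < +oo)%E.
Local Notation m := (moment mu).

Lemma m_ge0 n : 0 <= m n. Proof. exact: moment_ge0. Qed.

Lemma bound_l1 (b : nat -> R) L : 0 <= L -> cvgn (series m) ->
  (forall k, `|b k| <= m k * L) -> in_l1 b.
Proof.
move=> L0 cm hb; apply: (@in_l1_bound _ _ (L * limn (series m))) => N.
apply: le_trans (_ : \sum_(0 <= k < N) m k * L <= _).
  by apply: ler_sum => k _; exact: hb.
rewrite -mulr_suml mulrC ler_wpM2l //.
by rewrite -psE; apply: ps_le_lim => //; exact: m_ge0.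
Qed.

Lemma H_ps a k N : \sum_(0 <= n < N) `|m (n + k) * a n| <=
  m k * \sum_(0 <= n < N) `|a n|.
Proof.
rewrite mulr_sumr; apply: ler_sum => n _.
rewrite normrM ger0_norm ?m_ge0 // ler_wpM2r //.
exact/moment_le/leq_addl.
Qed.

Lemma H_cvg a : in_l1 a -> Hmu_series_cvg mu a.
Proof.
move=> ha k; apply: normed_cvg.
apply: (@ps_bound_cvg _ _ (m k * l1norm a)) => [n|N]; first exact: normr_ge0.
apply: le_trans (H_ps a k N) _.
by rewrite ler_wpM2l ?m_ge0 //; apply: l1_ps_le.
Qed.

Lemma H_bound a k : in_l1 a -> `|Hmu mu a k| <= m k * l1norm a.
Proof.
move=> ha; apply: lim_abs_le; first exact: H_cvg.
move=> N; apply: le_trans; first exact: ler_norm_sum.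
apply: le_trans (H_ps a k N) _.
by rewrite ler_wpM2l ?m_ge0 //; apply: l1_ps_le.
Qed.

Lemma C_bound a k : in_l1 a -> `|Cmu mu a k| <= m k * l1norm a.
Proof.
move=> ha; rewrite /Cmu normrM ger0_norm ?m_ge0 // ler_wpM2l ?m_ge0 //.
apply: le_trans; first exact: ler_norm_sum.
exact: l1_ps_le.
Qed.

Lemma H_D j a b : in_l1 a -> in_l1 b ->
  Hmu mu (fun k => a k + b k) j = Hmu mu a j + Hmu mu b j.
Proof.
move=> ha hb; rewrite /Hmu.
have -> : series (fun n => m (n + j) * (a n + b n)) =
   series (fun n => m (n + j) * a n) + series (fun n => m (n + j) * b n).
  apply/funext => N.
  rewrite /series /=.
  change (\sum_(0 <= k < N) m (k + j) * (a k + b k) = \sum_(0 <= k < N) m (k + j) * a k + \sum_(0 <= k < N) m (k + j) * b k).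
  by rewrite -big_split /=; apply: eq_bigr => n _; rewrite mulrDr.
by apply: limD; exact: H_cvg.
Qed.

Lemma H_Z j r a : in_l1 a -> Hmu mu (fun k => r * a k) j = r * Hmu mu a j.
Proof.
move=> ha; rewrite /Hmu.
have -> : series (fun n => m (n + j) * (r * a n)) =
   r *: series (fun n => m (n + j) * a n).
  apply/funext => N.
  rewrite /series /=.
  change (\sum_(0 <= k < N) m (k + j) * (r * a k) = r * \sum_(0 <= k < N) m (k + j) * a k).
  rewrite mulr_sumr; apply: eq_bigr => n _.
  by rewrite mulrCA.
by apply: limZl_tmp; exact: H_cvg.
Qed.

Lemma C_D j a b : Cmu mu (fun k => a k + b k) j = Cmu mu a j + Cmu mu b j.
Proof. by rewrite /Cmu big_split /= mulrDr. Qed.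

Lemma C_Z j r a : Cmu mu (fun k => r * a k) j = r * Cmu mu a j.
Proof. by rewrite /Cmu -mulr_sumr mulrCA. Qed.

Lemma C_iii : maps_l1 (Cmu mu) -> cvgn (series m).
Proof.
move=> hC; have h := hC _ (@delta_l1 R 0%N).
suff -> : series m = series (fun k => `|Cmu mu (@delta R 0) k|) by [].
apply/funext => N.
rewrite /series /=; apply: eq_bigr => k _.
rewrite /Cmu big_nat_recl // big1_seq ?addr0 /delta ?eqxx ?mulr1 ?ger0_norm ?m_ge0 //.
Qed.

End Main.

Unset Implicit Arguments.
Unset Strict Implicit.

Theorem theorem31 (R : realType) (mu : {measure set R -> \bar R})
  (mu_fin : (mu setT < +oo)%E)
  (mu_supp : mu (~` `[0%R, 1%R[) = 0%E) :
  [<-> (* (i) *)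
       (forall a, in_l1 a -> Hmu_series_cvg mu a) /\
       maps_l1 (Hmu mu) /\ maps_l1 (Cmu mu);
       (* (ii) *)
       ((forall a, in_l1 a -> Hmu_series_cvg mu a) /\ nuclear_l1 (Hmu mu)) /\
       nuclear_l1 (Cmu mu);
       (* (iii) *)
       cvg (series (moment mu) @ \oo)].
Proof.
have l1H : cvgn (series (moment mu)) -> maps_l1 (Hmu mu).
  move=> cm a ha; apply: (bound_l1 (l1norm_ge0 ha) cm) => k.
  exact: H_bound.
have l1C : cvgn (series (moment mu)) -> maps_l1 (Cmu mu).
  move=> cm a ha; apply: (bound_l1 (l1norm_ge0 ha) cm) => k.
  exact: C_bound.
have iii_ii : cvgn (series (moment mu)) ->
    ((forall a, in_l1 a -> Hmu_series_cvg mu a) /\ nuclear_l1 (Hmu mu)) /\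
    nuclear_l1 (Cmu mu).
  move=> cm; split; [split|].
  - by move=> a ha; exact: H_cvg.
  - apply: (@nuclear_gen _ _ (moment mu)) => //.
    + exact: l1H.
    + by move=> j; exact: moment_ge0.
    + by move=> j a b ha hb; exact: H_D.
    + by move=> j r a ha; exact: H_Z.
    + by move=> j a ha; exact: H_bound.
  - apply: (@nuclear_gen _ _ (moment mu)) => //.
    + exact: l1C.
    + by move=> j; exact: moment_ge0.
    + by move=> j a b ha hb; exact: C_D.
    + by move=> j r a ha; exact: C_Z.
    + by move=> j a ha; exact: C_bound.
tfae.
- by move=> [_ [_ hC]]; apply: iii_ii; exact: C_iii.
- by move=> [_ hC]; apply: C_iii; exact: hC.1.
- move=> cm; split; first by move=> a ha; exact: H_cvg.
  by split; [exact: l1H|exact: l1C].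
Qed.
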